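(* A graph $G=(V,E)$ is $(1,1)$-well-covered if and only if it admits a partition $V=(S,K)$, with $S$ an independent set and $K$ a clique, such that either $|N(x)\cap S|=0$ for every $x\in K$, or $|N(x)\cap S|=1$ for every $x \in K$.
   Context: A $(1,1)$-partition of $G$ is a partition of $V(G)$ into an independent set and a clique (possibly empty). A graph is well-covered if all its maximal independent sets have the same cardinality; it is $(1,1)$-well-covered if it admits a $(1,1)$-partition and is well-covered. $N(x)$ denotes the set of neighbors of $x$. *)

(* Defs.v *)
(* A finite simple graph is a symmetric irreflexive relation
   e on a finType T (vertex set V = T). *)
From mathcomp Require Import all_boot.
Set Implicit Arguments. Unset Strict Implicit. Unset Printing Implicit Defensive.

Section Graphs.
Variables (T : finType) (e : rel T).

Definition nbhd (x : T) : {set T} := [set y | e x y].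

Definition independent (S : {set T}) : Prop :=
  forall x y, x \in S -> y \in S -> ~~ e x y.

Definition clique (K : {set T}) : Prop :=
  forall x y, x \in K -> y \in K -> x != y -> e x y.

Definition maximal_independent (S : {set T}) : Prop :=
  independent S /\ forall x, x \notin S -> ~ independent (x |: S).

Definition well_covered : Prop :=
  forall S1 S2, maximal_independent S1 -> maximal_independent S2 ->
    #|S1| = #|S2|.

Definition partition11 (S K : {set T}) : Prop :=
  S :|: K = setT /\ S :&: K = set0 /\ independent S /\ clique K.

Definition has_partition11 : Prop := exists S K, partition11 S K.

Definition well_covered11 : Prop := has_partition11 /\ well_covered.

End Graphs.

(* Main.v *)
Require Import Defs.
From mathcomp Require Import all_boot.
From mathcomp Require Import zify.
Set Implicit Arguments. Unset Strict Implicit.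

Section Aux.
Variables (T : finType) (e : rel T).
Hypotheses (e_sym : symmetric e) (e_irr : irreflexive e).
Variables S K : {set T}.
Hypothesis hP : partition11 e S K.

Lemma inSK x : (x \in S) || (x \in K).
Proof.
have: x \in S :|: K by rewrite hP.1 inE.
by rewrite inE.
Qed.

Lemma notSK x : x \in S -> x \in K -> False.
Proof.
move=> xS xK; have: x \in S :&: K by rewrite inE xS xK.
by rewrite hP.2.1 inE.
Qed.

Definition Mx x := x |: (S :\: nbhd e x).

Lemma Mx_mis x : x \in K -> maximal_independent e (Mx x).
Proof.
move=> xK; split.
- move=> a b; rewrite /Mx /nbhd !inE => /predU1P[->|/andP[na aS]] /predU1P[->|/andP[nb bS]].
  + by rewrite e_irr.
  + exact: nb.
  + by rewrite e_sym.
  + exact: hP.2.2.1.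
- move=> y; rewrite /Mx /nbhd !inE negb_or => /andP[yx H] Hind.
  have: ~~ e y x by apply: Hind; rewrite !inE ?eqxx //= ?eqxx ?orbT.
  apply/negP/negPn.
  case: (boolP (y \in S)) => yS.
  + move: H; rewrite yS andbT negbK => H; by rewrite e_sym.
  + have yK : y \in K by move: (inSK y); rewrite (negbTE yS).
    exact: hP.2.2.2.
Qed.

Lemma card_Mx x : x \in K -> #|Mx x| = (#|S| - #|nbhd e x :&: S|).+1.
Proof.
move=> xK.
have xS : x \notin S by apply/negP => xS; exact: notSK xS xK.
by rewrite /Mx cardsU1 cardsD setIC !inE (negbTE xS) andbF.
Qed.

Lemma mis_form I : maximal_independent e I -> I = S \/ exists2 x, x \in K & I = Mx x.
Proof.
move=> [indI maxI].
case: (set_0Vmem (I :&: K)) => [IK0 | [x]].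
- have IS : forall b, b \in I -> b \in S.
    move=> b bI; case/orP: (inSK b) => // bK.
    have: b \in I :&: K by rewrite inE bI bK.
    by rewrite IK0 inE.
  left; apply/setP => y; apply/idP/idP; first exact: IS.
  move=> yS; apply/negPn/negP => yI; apply: (maxI y yI).
  have ny : forall b, b \in I -> ~~ e y b.
    move=> b bI; exact: hP.2.2.1 yS (IS b bI).
  move=> a b; rewrite !inE => /predU1P[->|aI] /predU1P[->|bI].
  + by rewrite e_irr.
  + exact: ny.
  + rewrite e_sym; exact: ny.
  + exact: indI.
- rewrite inE => /andP[xI xK]; right; exists x => //.
  have IS : forall b, b \in I -> b != x -> b \in S.
    move=> b bI bx; case/orP: (inSK b) => // bK.
    have := indI b x bI xI.
    by rewrite (hP.2.2.2 b x bK xK bx).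
  apply/setP=> y; rewrite /Mx /nbhd !inE.
  case: (eqVneq y x) => [->|yx] /=; first by rewrite xI.
  apply/idP/idP.
  + move=> yI; rewrite (IS y yI yx) andbT; exact: indI.
  + case/andP=> nxy yS; apply/negPn/negP=> yI; apply: (maxI y yI).
    have ny : forall b, b \in I -> ~~ e y b.
      move=> b bI; case: (eqVneq b x) => [->|bx]; first by rewrite e_sym.
      exact: hP.2.2.1 yS (IS b bI bx).
    move=> a b; rewrite !inE => /predU1P[->|aI] /predU1P[->|bI].
    * by rewrite e_irr.
    * exact: ny.
    * rewrite e_sym; exact: ny.
    * exact: indI.
Qed.

End Aux.

Theorem lemma3 (T : finType) (e : rel T)
    (e_sym : symmetric e) (e_irr : irreflexive e) :
  well_covered11 e <->
  exists S K : {set T}, partition11 e S K /\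
    ((forall x, x \in K -> #|nbhd e x :&: S| = 0) \/
     (forall x, x \in K -> #|nbhd e x :&: S| = 1)).
Proof.
split.
- move=> [[S [K hP]] wc]; exists S, K; split => //.
  have dle : forall x, #|nbhd e x :&: S| <= #|S|.
    by move=> x; rewrite subset_leq_card // subsetIr.
  have eqd : forall x y, x \in K -> y \in K -> #|nbhd e x :&: S| = #|nbhd e y :&: S|.
    move=> x y xK yK.
    have := wc _ _ (Mx_mis e_sym e_irr hP xK) (Mx_mis e_sym e_irr hP yK).
    rewrite !(card_Mx hP) // => [[]] H.
    have := dle x; have := dle y; lia.
  case: (boolP [forall x in K, #|nbhd e x :&: S| == 0]) => [/forall_inP H|].
    by left => x /H /eqP.
  rewrite negb_forall_in => /existsP[x0 /andP[x0K dx0]].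
  have Smis : maximal_independent e S.
    split; first exact: hP.2.2.1.
    move=> z zS Hind; have zK : z \in K by move: (inSK hP z); rewrite (negbTE zS).
    have : 0 < #|nbhd e z :&: S| by rewrite (eqd z x0) // lt0n.
    case/card_gt0P => w; rewrite /nbhd !inE => /andP[ezw wS].
    have := Hind z w; rewrite !inE eqxx wS orbT => /(_ isT isT).
    by rewrite ezw.
  have := wc _ _ Smis (Mx_mis e_sym e_irr hP x0K); rewrite (card_Mx hP) // => H.
  right => x xK; rewrite (eqd x x0) //.
  have := dle x0; move: dx0 H; lia.
- move=> [S [K [hP H]]]; split; first by exists S, K.
  suff [c Hc] : exists c, forall I, maximal_independent e I -> #|I| = c.
    by move=> I J HI HJ; rewrite (Hc I HI) (Hc J HJ).
  case: H => H; last first.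
    exists #|S| => I HI; case: (mis_form e_sym e_irr hP HI) => [-> // | [x xK ->]].
    have := H x xK; have : #|nbhd e x :&: S| <= #|S| by rewrite subset_leq_card // subsetIr.
    rewrite (card_Mx hP xK); lia.
  exists (if K == set0 then #|S| else #|S|.+1).
  move=> I HI; case: (mis_form e_sym e_irr hP HI) => [IS | [x xK ->]].
  + rewrite IS.
    case: (set_0Vmem K) => [-> | [x xK]]; first by rewrite eqxx.
    exfalso; move: HI => [_ maxI]; rewrite IS in maxI.
    have xS : x \notin S.
      by apply/negP => xS; exact: (notSK hP xS xK).
    apply: (maxI x xS) => a b; rewrite !inE => /predU1P[->|aS] /predU1P[->|bS].
    * by rewrite e_irr.
    * apply/negP => exb; have := H x xK; move/eqP; rewrite cards_eq0 => /eqP E.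
      have : b \in nbhd e x :&: S by rewrite /nbhd !inE exb bS.
      by rewrite E inE.
    * apply/negP => exb; rewrite e_sym in exb; have := H x xK; move/eqP; rewrite cards_eq0 => /eqP E.
      have : a \in nbhd e x :&: S by rewrite /nbhd !inE exb aS.
      by rewrite E inE.
    * exact: hP.2.2.1.
  + rewrite (card_Mx hP xK) (H x xK) subn0.
    have -> : (K == set0) = false by apply/negP => /eqP K0; rewrite K0 inE in xK.
    by [].
Qed.
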